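(* Let $T$ be a tree on $n\ge3$ vertices and $k\ge2$ even. Then the order-$k$ Steiner distance hypermatrix $M$ of $T$ is conditionally strictly negative definite, i.e., $M(\mathbf{c},\ldots,\mathbf{c})<0$ for every nonzero $\mathbf{c}\in\mathbb{R}^n$ with $\sum_{i=1}^n c_i=0$.
   Context: $T$ is a tree with vertex set $\{1,\dots,n\}$. For $U\subseteq V(T)$, the Steiner distance $S(U)$ is the minimum number of edges of a connected subgraph of $T$ whose vertex set contains $U$. The order-$k$ Steiner distance hypermatrix $M$ has entries $M_{(i_1,\dots,i_k)}=S(\{i_1,\dots,i_k\})$, and $M(\mathbf{x}_1,\dots,\mathbf{x}_k)=\sum_{\mathbf{i}\in V(T)^k}M_{\mathbf{i}}\prod_{j=1}^k x_{j i_j}$. *)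

(* Defs.v *)
From HB Require Import structures.
From mathcomp Require Import all_boot all_order all_algebra.
Set Implicit Arguments. Unset Strict Implicit. Unset Printing Implicit Defensive.
Import Order.TTheory GRing.Theory Num.Theory.

Definition simple_graph (n : nat) (e : rel 'I_n) : Prop :=
  symmetric e /\ irreflexive e.

Definition acyclic (n : nat) (e : rel 'I_n) : Prop :=
  forall c : seq 'I_n, uniq c -> 3 <= size c -> ~~ cycle e c.

Definition is_tree (n : nat) (e : rel 'I_n) : Prop :=
  [/\ simple_graph e, (forall x y, connect e x y) & acyclic e].

(* A subgraph (W, F) of the graph e: F is a set of edges {x,y} of e with both
   endpoints in W; it is connected if any two vertices of W are joined by a
   path using only edges of F (such paths automatically stay in W). *)
Definition subgraph_edge (n : nat) (F : {set {set 'I_n}}) : rel 'I_n :=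
  fun a b => [set a; b] \in F.

Definition connected_subgraph (n : nat) (e : rel 'I_n)
    (W : {set 'I_n}) (F : {set {set 'I_n}}) : bool :=
  [forall f in F, exists x, exists y, [&& e x y, x \in W, y \in W & f == [set x; y]]]
  && [forall x in W, forall y in W, connect (subgraph_edge F) x y].

Definition steiner_adm (n : nat) (e : rel 'I_n) (U : {set 'I_n})
    (p : {set 'I_n} * {set {set 'I_n}}) : bool :=
  (U \subset p.1) && connected_subgraph e p.1 p.2.

(* The default value #|{set 'I_n}| bounds every #|F| from above, so it never
   affects the minimum when an admissible subgraph exists (always, in a
   connected graph). *)
Definition steiner (n : nat) (e : rel 'I_n) (U : {set 'I_n}) : nat :=
  \big[minn/#|[set: {set 'I_n}]|]_(p : {set 'I_n} * {set {set 'I_n}} | steiner_adm e U p)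
    #|p.2|.

(* M(c,...,c) for the order-k Steiner distance hypermatrix:
   sum over i in V^k of S({i_1,...,i_k}) * prod_j c_{i_j}. *)
Definition steiner_form (R : numDomainType) (n k : nat) (e : rel 'I_n)
    (c : 'cV[R]_n) : R :=
  \sum_(i : {ffun 'I_k -> 'I_n})
    ((steiner e [set i j | j : 'I_k])%:R * \prod_(j < k) c (i j) 0)%R.

(* Main.v *)
Require Import Defs.
From HB Require Import structures.
From mathcomp Require Import all_boot all_order all_algebra.
Set Implicit Arguments. Unset Strict Implicit. Unset Printing Implicit Defensive.
Import Order.TTheory GRing.Theory Num.Theory.

Lemma bigmin_le (I : eqType) (r : seq I) (P : pred I) (F : I -> nat) t i0 :
  i0 \in r -> P i0 -> \big[minn/t]_(i <- r | P i) F i <= F i0.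
Proof.
elim: r => [//|a r IH]; rewrite inE big_cons => /orP[/eqP<-|ir] Pi.
  by rewrite Pi geq_minl.
by case: ifP => _; rewrite ?(leq_trans (geq_minr _ _)) ?IH.
Qed.

Section Tree.
Variable n : nat.
Variable e : rel 'I_n.
Hypothesis esym : symmetric e.
Hypothesis eirr : irreflexive e.
Hypothesis econ : forall x y, connect e x y.
Hypothesis eacy : acyclic e.

Definition avoid (f : {set 'I_n}) : rel 'I_n :=
  fun s t => e s t && ([set s; t] != f).
Definition side (x y : 'I_n) : pred 'I_n := connect (avoid [set x; y]) x.

Lemma avoid_sym (f : {set 'I_n}) : symmetric (avoid f).
Proof. by move=> s t; rewrite /avoid esym setUC. Qed.

Lemma avoid_csym (f : {set 'I_n}) : connect_sym (avoid f).
Proof. exact: sym_connect_sym (avoid_sym f). Qed.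

Lemma set2C (x y : 'I_n) : [set x; y] = [set y; x].
Proof. by rewrite setUC. Qed.

Lemma path_avoid (f : {set 'I_n}) b a q : path e a q -> b \notin a :: q -> b \in f ->
  path (avoid f) a q.
Proof.
elim: q a => [//|a' q IH] a /= /andP[eaa' pq] bn bf.
have bn' : b \notin a' :: q by move: bn; rewrite inE negb_or => /andP[].
rewrite /avoid eaa' IH // andbT.
apply/negP=> /eqP E; move: bf; rewrite -E !inE.
move: bn; rewrite !inE !negb_or => /and3P[/negPf-> /negPf-> _] //.
Qed.

Lemma avoid_e (f : {set 'I_n}) : subrel (avoid f) e.
Proof. by move=> s t /andP[]. Qed.

Lemma side_irr x y : e x y -> ~~ side x y y.
Proof.
move=> exy; apply/negP => /connectP[p pp].
case: (shortenP pp) => p' pp' up' _ ly; subst y; clear pp.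
have ep' := sub_path (@avoid_e _) pp'.
case: p' pp' up' exy ep' => [|a [|b r]] /=.
- by move=> _ _; rewrite eirr.
- by rewrite /avoid eqxx andbF.
- move=> _ up' exy ep'.
  have := eacy (c := [:: x, a, b & r]) up' isT.
  by rewrite /cycle rcons_path /= ep' /= esym exy.
Qed.

Lemma side_tot x y z : e x y -> side x y z || side y x z.
Proof.
move=> exy; have /connectP[p pp ->] := econ x z.
elim/last_ind: p pp => [|p b IH]; first by rewrite /side connect0.
rewrite rcons_path last_rcons => /andP[/IH H eb].
case: (boolP ([set last x p; b] == [set x; y])) => [/eqP E | NE].
  have : b \in [set x; y] by rewrite -E !inE eqxx orbT.
  by rewrite !inE => /orP[]/eqP->; rewrite /side connect0 ?orbT.
have ab : avoid [set x; y] (last x p) b by rewrite /avoid eb.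
case/orP: H => H; [apply/orP; left | apply/orP; right].
  exact: connect_trans H (connect1 ab).
by apply: connect_trans H (connect1 _); rewrite set2C.
Qed.

Lemma side_disj x y z : e x y -> side x y z -> side y x z -> False.
Proof.
move=> exy H1 H2; have := side_irr exy; rewrite /side.
rewrite (connect_trans H1) //; move: H2; rewrite /side set2C avoid_csym //.
Qed.

Lemma set2_eq (s t x y : 'I_n) : [set s; t] = [set x; y] ->
  (s = x /\ t = y) \/ (s = y /\ t = x).
Proof.
move=> E.
have hs : s \in [set x; y] by rewrite -E !inE eqxx.
have ht : t \in [set x; y] by rewrite -E !inE eqxx orbT.
have hx : x \in [set s; t] by rewrite E !inE eqxx.
have hy : y \in [set s; t] by rewrite E !inE eqxx orbT.
move: hs ht hx hy; rewrite !inE.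
case/orP=> /eqP hs; case/orP=> /eqP ht; rewrite hs ht ?orbb.
- by move=> _ /eqP ->; left.
- by left.
- by right.
- by move=> /eqP -> _; left.
Qed.

Definition hit (U : {set 'I_n}) (S : pred 'I_n) := [exists u in U, S u].
Definition sepr (U : {set 'I_n}) x y :=
  [&& e x y, hit U (side x y) & hit U (side y x)].
Definition sepP (U : {set 'I_n}) :=
  [set p : 'I_n * 'I_n | (p.1 < p.2)%N && sepr U p.1 p.2].
Definition F0 (U : {set 'I_n}) := [set [set p.1; p.2] | p in sepP U].
Definition W0 (U : {set 'I_n}) :=
  U :|: [set z | [exists p in sepP U, (z == p.1) || (z == p.2)]].
Definition avV (S : seq 'I_n) : rel 'I_n :=
  fun s t => [&& e s t, s \notin S & t \notin S].

Lemma sepr_sym (U : {set 'I_n}) x y : sepr U x y = sepr U y x.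
Proof. by rewrite /sepr esym; congr (_ && _); exact: andbC. Qed.

Lemma inF0 (U : {set 'I_n}) x y : sepr U x y -> [set x; y] \in F0 U.
Proof.
move=> H; have exy : e x y by case/andP: H.
case: (ltngtP x y) => [xy|yx|/val_inj xy]; last by move: exy; rewrite xy eirr.
- by apply/imsetP; exists (x, y) => //; rewrite inE xy.
- by apply/imsetP; exists (y, x) => //=; rewrite ?inE ?yx 1?sepr_sym // set2C.
Qed.

Lemma card_F0 (U : {set 'I_n}) : #|F0 U| = #|sepP U|.
Proof.
apply: card_in_imset => -[a b] [a' b']; rewrite !inE /= => /andP[ab _] /andP[ab' _].
case/set2_eq => [[-> ->] //|[E1 E2]]; subst.
by move: (ltn_trans ab ab'); rewrite ltnn.
Qed.

Lemma SF_sym (F : {set {set 'I_n}}) : connect_sym (subgraph_edge F).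
Proof. by apply: sym_connect_sym => a b; rewrite /subgraph_edge set2C. Qed.

Lemma avV_sym S : symmetric (avV S).
Proof. by move=> s t; rewrite /avV esym; congr (_ && _); exact: andbC. Qed.

Lemma path_avV S a q : path e a q -> (forall s, s \in a :: q -> s \notin S) ->
  path (avV S) a q.
Proof.
elim: q a => [//|b q IH] a /= /andP[eab pq] H.
rewrite /avV eab H ?inE ?eqxx // H ?inE ?eqxx ?orbT //=.
by apply: IH => // s sq; apply: H; rewrite inE sq orbT.
Qed.

Lemma pathF (U : {set 'I_n}) w : w \in U -> forall p x, path e x p -> uniq (x :: p) ->
  last x p = w -> (exists2 u, u \in U & connect (avV p) u x) ->
  forall z, z \in x :: p -> connect (subgraph_edge (F0 U)) x z.
Proof.
move=> wU; elim=> [|y q IH] x /=.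
  by move=> _ _ _ _ z; rewrite inE => /eqP->; apply: connect0.
move=> /andP[exy pq] /andP[xn uq] lw [u uU cu].
have sep : sepr U x y.
  rewrite /sepr exy /=; apply/andP; split; apply/existsP.
  - exists u; rewrite uU /side /= avoid_csym.
    apply: connect_sub cu => s t /and3P[est sn tn]; apply: connect1.
    rewrite /avoid est; apply/negP => /eqP E.
    have : y \in [set s; t] by rewrite E !inE eqxx orbT.
    by rewrite !inE => /orP[]/eqP yE; [move: sn | move: tn]; rewrite -yE inE eqxx.
  - exists w; rewrite wU /side; apply/connectP; exists q => //.
    by apply: (path_avoid (b := x)) => //; rewrite !inE eqxx orbT.
have exy' : subgraph_edge (F0 U) x y by apply: inF0.
move=> z; rewrite inE => /orP[/eqP->|zq]; first exact: connect0.
apply: connect_trans (connect1 exy') (IH y pq uq lw _ z zq).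
exists u => //; apply: connect_trans (connect_sub _ cu) (connect1 _).
  move=> s t /and3P[est sn tn]; apply: connect1; rewrite /avV est.
  by move: sn tn; rewrite !inE !negb_or => /andP[_ ->] /andP[_ ->].
by rewrite /avV exy; move: xn uq; rewrite !inE negb_or => /andP[_ ->] /andP[->].
Qed.

Lemma claimA (U : {set 'I_n}) u w : u \in U -> w \in U -> connect (subgraph_edge (F0 U)) u w.
Proof.
move=> uU wU; have /connectP[p pp lw] := econ u w.
case: (shortenP pp) lw => p' pp' up' _ lw; clear pp.
apply: (pathF wU pp' up' (Logic.eq_sym lw)); first by exists u => //; apply: connect0.
by rewrite lw mem_last.
Qed.

Lemma claimC (U : {set 'I_n}) x y : sepr U x y ->
  exists2 u, u \in U & connect (subgraph_edge (F0 U)) x u.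
Proof.
move=> /and3P[exy /existsP[u /andP[uU su]] /existsP[w /andP[wU sw]]].
move: su => /connectP[p pp lu].
case: (shortenP pp) lu => p' pp' up' _ lu; clear pp.
have inside : forall s, s \in x :: p' -> side x y s := path_connect pp'.
have ep' := sub_path (@avoid_e _) pp'.
have yn : y \notin x :: p'.
  by apply/negP => /inside; apply/negP; apply: side_irr.
have P1 : path e y (x :: p') by rewrite /= esym exy.
have U1 : uniq (y :: x :: p') by rewrite /= yn.
have L1 : last y (x :: p') = u by rewrite /= lu.
have I1 : exists2 w0, w0 \in U & connect (avV (x :: p')) w0 y.
  exists w => //; rewrite (sym_connect_sym (@avV_sym _)).
  move: sw => /connectP[q pq lq]; apply/connectP; exists q => //.
  apply: path_avV; first by apply: sub_path pq; apply: avoid_e.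
  move=> s /(path_connect pq) ss; apply/negP => /inside sx.
  exact: (side_disj exy sx ss).
have H := pathF uU P1 U1 L1 I1.
exists u => //.
have Hx := H x; rewrite !inE eqxx orbT in Hx; have {}Hx := Hx isT.
have Hu : connect (subgraph_edge (F0 U)) y u by apply: H; rewrite -L1 mem_last.
by apply: connect_trans Hu; rewrite SF_sym.
Qed.

Lemma lowerF (U : {set 'I_n}) W F : steiner_adm e U (W, F) -> F0 U \subset F.
Proof.
move=> /andP[/= UW /andP[Fok Fcon]].
apply/subsetP => f /imsetP[[x y] /=]; rewrite inE /=.
move=> /andP[_ /and3P[exy /existsP[u /andP[uU su]] /existsP[w /andP[wU sw]]]] ->.
apply/negPn/negP => fn.
have uW := subsetP UW u uU; have wW := subsetP UW w wU.
move/forallP: Fcon => /(_ u); rewrite uW /= => /forallP/(_ w); rewrite wW /= => cuw.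
have cuw' : connect (avoid [set x; y]) u w.
  apply: connect_sub cuw => s t; rewrite /subgraph_edge => st; apply: connect1; rewrite /avoid.
  move/forallP: Fok => /(_ [set s; t]); rewrite st /=.
  move=> /existsP[x' /existsP[y' /and4P[ex' _ _ /eqP /set2_eq E]]].
  have -> : e s t by case: E => -[-> ->] //; rewrite esym.
  by apply/negP => /eqP E'; move: st; rewrite E' (negPf fn).
exact: (side_disj exy (connect_trans su cuw') sw).
Qed.

Lemma toU (U : {set 'I_n}) a : a \in W0 U ->
  exists2 u, u \in U & connect (subgraph_edge (F0 U)) a u.
Proof.
rewrite inE => /orP[aU|]; first by exists a => //; apply: connect0.
rewrite inE => /existsP[[x y] /andP[pin /orP[]/eqP->]];
  move: pin; rewrite inE /= => /andP[_ sp].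
- exact: claimC sp.
- by apply: (claimC (x := y) (y := x)); rewrite sepr_sym.
Qed.

Lemma adm0 (U : {set 'I_n}) : steiner_adm e U (W0 U, F0 U).
Proof.
apply/and3P; split => /=; first exact: subsetUl.
  apply/forallP => f; apply/implyP => /imsetP[[x y] pin ->] /=.
  move: (pin); rewrite inE /= => /andP[_ /and3P[exy _ _]].
  apply/existsP; exists x; apply/existsP; exists y.
  by rewrite exy eqxx !inE /=; apply/and3P; split => //; apply/orP; right;
     apply/existsP; exists (x, y); rewrite pin eqxx ?orbT.
apply/forallP => a; apply/implyP => /toU[u uU au].
apply/forallP => b; apply/implyP => /toU[w wU bw].
apply: connect_trans au _; apply: connect_trans (claimA uU wU) _.
by rewrite SF_sym.
Qed.

Lemma steinerE (U : {set 'I_n}) : steiner e U = #|sepP U|.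
Proof.
rewrite /steiner; apply/eqP; rewrite eqn_leq; apply/andP; split.
  rewrite -card_F0; have := adm0 U => H.
  by apply: bigmin_le H; exact: mem_index_enum.
apply: (big_ind (fun m => #|sepP U| <= m)).
- by rewrite -card_F0; apply: subset_leq_card; apply: subsetT.
- by move=> a b ha hb; rewrite leq_min ha hb.
- by move=> [W F] /lowerF H; rewrite -card_F0; exact: subset_leq_card H.
Qed.

Lemma nb_exists v z : z != v -> exists2 w, e v w & side w v z.
Proof.
move=> zv; have /connectP[p pp lz] := econ v z.
case: (shortenP pp) lz => p' pp' up' _ lz; clear pp.
case: p' pp' up' lz => [|w q] /=; first by move=> _ _ zE; rewrite zE eqxx in zv.
move=> /andP[evw pq] /andP[vn _] lz; exists w => //.
apply/connectP; exists q => //.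
by apply: (path_avoid (b := v)) => //; rewrite !inE eqxx orbT.
Qed.

Lemma nb_unique v w w' z : e v w -> e v w' -> side w v z -> side w' v z -> w = w'.
Proof.
move=> evw evw' sw /connectP[q pq lz].
apply/eqP/negPn/negP => ww'.
have vn : v \notin w' :: q.
  apply/negP => /(path_connect pq) sv.
  have ew'v : e w' v by rewrite esym.
  by move: (side_irr ew'v); rewrite /side sv.
have svz : side v w z.
  apply/connectP; exists (w' :: q) => //=.
  apply/andP; split.
    rewrite /avoid evw'; apply/negP => /eqP /set2_eq [[_ E]|[E _]].
    - by rewrite E eqxx in ww'.
    - by move: evw; rewrite -E eirr.
  by apply: (path_avoid (b := v)); rewrite ?inE ?eqxx //; apply: sub_path pq; apply: avoid_e.
exact: (side_disj evw svz sw).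
Qed.
End Tree.

Section Alg.
Variable R : realFieldType.
Variable n : nat.
Variable e : rel 'I_n.
Hypothesis esym : symmetric e.
Hypothesis eirr : irreflexive e.
Hypothesis econ : forall x y, connect e x y.
Hypothesis eacy : acyclic e.
Variable k : nat.
Hypothesis k0 : (0 < k)%N.
Variable c : 'cV[R]_n.
Local Open Scope ring_scope.

Definition cS (S : pred 'I_n) (v : 'I_n) : R := if S v then c v 0 else 0.
Definition aS (S : pred 'I_n) : R := \sum_v cS S v.

Lemma sum_prod (f : 'I_n -> R) :
  \sum_(i : {ffun 'I_k -> 'I_n}) \prod_(j < k) f (i j) = (\sum_v f v) ^+ k.
Proof.
have := @bigA_distr_bigA R 0 1 *%R +%R 'I_k 'I_n (fun _ v => f v).
by move=> /= <-; rewrite prodr_const card_ord.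
Qed.

Lemma prodS (S : pred 'I_n) (i : {ffun 'I_k -> 'I_n}) :
  \prod_(j < k) cS S (i j) = if [forall j, S (i j)] then \prod_(j < k) c (i j) 0 else 0.
Proof.
case: ifPn => [/forallP H|/forallPn[j Hj]].
  by apply: eq_bigr => j _; rewrite /cS H.
by rewrite (bigD1 j) //= /cS (negPf Hj) mul0r.
Qed.

Lemma hit_im (S : pred 'I_n) (i : {ffun 'I_k -> 'I_n}) :
  hit [set i j | j : 'I_k] S = [exists j, S (i j)].
Proof.
apply/existsP/existsP => [[u /andP[/imsetP[j _ ->] Su]]|[j Sj]].
  by exists j.
by exists (i j); rewrite Sj andbT; apply/imsetP; exists j.
Qed.

Lemma pointwise x y (i : {ffun 'I_k -> 'I_n}) : e x y ->
  (if [exists j, side e x y (i j)] && [exists j, side e y x (i j)] then 1 else 0)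
    * \prod_(j < k) c (i j) 0
  = \prod_(j < k) c (i j) 0 - \prod_(j < k) cS (side e x y) (i j)
     - \prod_(j < k) cS (side e y x) (i j).
Proof.
move=> exy; rewrite !prodS.
have j0 : 'I_k := Ordinal k0.
case: (boolP [forall j, side e x y (i j)]) => [/forallP HA|/forallPn[ja Ha]];
case: (boolP [forall j, side e y x (i j)]) => [/forallP HB|/forallPn[jb Hb]].
- by case: (side_disj esym eirr eacy exy (HA j0) (HB j0)).
- have -> : [exists j, side e y x (i j)] = false.
    apply/negbTE/existsP => -[j Bj].
    exact: (side_disj esym eirr eacy exy (HA j) Bj).
  by rewrite andbF mul0r subr0 subrr.
- have -> : [exists j, side e x y (i j)] = false.
    apply/negbTE/existsP => -[j Aj].
    exact: (side_disj esym eirr eacy exy Aj (HB j)).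
  by rewrite mul0r subr0 subrr.
- have -> : [exists j, side e x y (i j)].
    apply/existsP; exists jb; move: (side_tot econ (i jb) exy).
    by rewrite (negPf Hb) orbF.
  have -> : [exists j, side e y x (i j)].
    apply/existsP; exists ja; move: (side_tot econ (i ja) exy).
    by rewrite (negPf Ha).
  by rewrite mul1r !subr0.
Qed.


Definition term (p : 'I_n * 'I_n) : R :=
  if (p.1 < p.2)%N && e p.1 p.2 then
    - (aS (side e p.1 p.2) ^+ k + aS (side e p.2 p.1) ^+ k) else 0.

Lemma formE : \sum_(i < n) c i 0 = 0 -> steiner_form k e c = \sum_p term p.
Proof.
move=> hsum; rewrite /steiner_form.
under eq_bigr => i _ do
  rewrite (steinerE esym eirr econ eacy) -sum1_card natr_sum big_mkcond /= mulr_suml.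
rewrite exchange_big /=; apply: eq_bigr => -[x y] _; rewrite /term /=.
case: ifP => [/andP[xy exy]|ng].
  under eq_bigr => i _ do rewrite inE /= xy /sepr exy /= !hit_im pointwise //.
  rewrite !sumrB !sum_prod.
  rewrite (sum_prod (fun v => c v 0)) hsum expr0n eqn0Ngt k0 /=.
  by rewrite /aS sub0r opprD.
apply: big1 => i _; rewrite inE /sepr /= andbA ng /=.
by rewrite mul0r.
Qed.

Lemma c_zero : (forall x y, e x y -> aS (side e x y) = 0) ->
  \sum_(i < n) c i 0 = 0 -> c = 0.
Proof.
move=> H hsum; apply/matrixP => v j; rewrite ord1 !mxE.
have E : \sum_(z | z != v) c z 0 = 0.
  transitivity (\sum_z \sum_w (if e v w && side e w v z then c z 0 else 0)).
    rewrite big_mkcond; apply: eq_bigr => z _ /=.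
    case: ifPn => zv.
      have [w0 ew0 sw0] := nb_exists econ zv.
      rewrite (bigD1 w0) ?ew0 ?sw0 //= big1 ?addr0 // => w ww0.
      case: ifP => // /andP[evw sw].
      by rewrite (nb_unique esym eirr eacy evw ew0 sw sw0) eqxx in ww0.
    move/negPn: zv => /eqP ->; symmetry; apply: big1 => w _.
    case: ifP => // /andP[evw sw].
    have ewv : e w v by rewrite esym.
    by move: (side_irr esym eirr eacy ewv); rewrite sw.
  rewrite exchange_big; apply: big1 => w _ /=.
  case: (boolP (e v w)) => evw /=; last by apply: big1.
  have ewv : e w v by rewrite esym.
  by have := H _ _ ewv; rewrite /aS /cS.
by move: hsum; rewrite (bigD1 v) //= E addr0.
Qed.
End Alg.

From mathcomp Require Import lra.
Local Open Scope ring_scope.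

Theorem mainTheorem4 (R : realFieldType) (n k : nat) (e : rel 'I_n)
    (hT : is_tree e) (hn : (3 <= n)%N) (hk : (2 <= k)%N) (hkeven : ~~ odd k)
    (c : 'cV[R]_n) (hc : c != 0) (hsum : \sum_(i < n) c i 0 = 0) :
  steiner_form k e c < 0.
Proof.
case: hT => [[esym eirr] econ eacy].
have k0 : (0 < k)%N by apply: leq_trans hk.
rewrite (formE esym eirr econ eacy k0 hsum).
have tle : forall p, term e k c p <= 0.
  move=> p; rewrite /term; case: ifP => _ //; rewrite oppr_le0.
  by apply: addr_ge0; apply: exprn_even_ge0.
case: (boolP [exists p : 'I_n * 'I_n, ((p.1 < p.2)%N && e p.1 p.2) &&
   ((aS c (side e p.1 p.2) != 0) || (aS c (side e p.2 p.1) != 0))]).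
  move=> /existsP[p /andP[g nz]].
  rewrite (bigD1 p) //=.
  have hr : \sum_(i | i != p) term e k c i <= 0 by apply: sumr_le0.
  have hp : term e k c p < 0.
    rewrite /term g oppr_lt0.
    have ha := exprn_even_ge0 (aS c (side e p.1 p.2)) hkeven.
    have hb := exprn_even_ge0 (aS c (side e p.2 p.1)) hkeven.
    case/orP: nz => nz.
      have := exprn_even_gt0 (aS c (side e p.1 p.2)) hkeven; rewrite nz orbT => h.
      lra.
    have := exprn_even_gt0 (aS c (side e p.2 p.1)) hkeven; rewrite nz orbT => h.
    lra.
  lra.
move=> Hn; exfalso; move/negP: hc; apply; apply/eqP.
apply: (c_zero esym eirr econ eacy _ hsum) => x y exy.
apply/eqP/negPn/negP => nz; move/negP: Hn; apply; apply/existsP.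
case: (ltngtP x y) => [xy|yx|/val_inj xy]; last by move: exy; rewrite xy eirr.
  by exists (x, y); rewrite /= xy exy nz.
by exists (y, x); rewrite /= yx esym exy nz orbT.
Qed.
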